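(* Let $h_1\subsetneq h_2^*$ be strongly separated half-spaces. Then for $i=1,2$ the set $h_i\cap B(h_1,h_2)$ consists of a single vertex $x_i$, and $B(h_1,h_2)=\mathcal I(x_1,x_2)$. Moreover the half-spaces separating points of $B(h_1,h_2)$ are exactly those $h$ with $h_1\subseteq h\subseteq h_2^*$ or $h_1\subseteq h^*\subseteq h_2^*$.
   Context: $X$ is a finite-dimensional CAT(0) cube complex identified with its vertex set, $\mathfrak H$ its set of half-spaces, $h^*=X\setminus h$, $U_v=\{h:v\in h\}$. Transverse ($\pitchfork$): $h\cap k,h\cap k^*,h^*\cap k,h^*\cap k^*$ all nonempty; strongly separated: no half-space transverse to both. Write $\hat a\subset b$ if $a\subsetneq b$ or $a^*\subsetneq b$. For $h_1\subsetneq h_2^*$, $\beta(h_1,h_2)$ is the set of $h$ with ($\hat h_1\subset h$ and $h\pitchfork h_2$) or ($\hat h_2\subset h$ and $h\pitchfork h_1$) or ($\hat h_1\subset h$ and $\hat h_2\subset h$); the bridge is $B(h_1,h_2)=\{x\in X: x\in h\ \forall h\in\beta(h_1,h_2)\}$. For vertices $v,w$, $\mathcal I(v,w)=\{m\in X:U_v\cap U_w\subset U_m\}$. *)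

(* Defs.v *)
(* A CAT(0) cube complex is modelled by its vertex set X
   together with the 1-skeleton adjacency: a median graph. *)
From Stdlib Require Import Arith List.

Section Defs.
Variable X : Type.
Variable adj : X -> X -> Prop.

Inductive walk : nat -> X -> X -> Prop :=
| walk0 x : walk 0 x x
| walkS n x y z : adj x y -> walk n y z -> walk (S n) x z.

Definition is_dist (u v : X) (n : nat) : Prop :=
  walk n u v /\ forall m, walk m u v -> n <= m.

Definition geod_interval (u v w : X) : Prop :=
  exists a b c, is_dist u w a /\ is_dist w v b /\ is_dist u v c /\ a + b = c.

Definition median_graph : Prop :=
  (forall x y, adj x y -> adj y x) /\
  (forall x, ~ adj x x) /\
  (forall u v, exists n, walk n u v) /\
  (forall u v w, exists! m,
      geod_interval u v m /\ geod_interval v w m /\ geod_interval u w m).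

Definition convex (C : X -> Prop) : Prop :=
  forall u v w, C u -> C v -> geod_interval u v w -> C w.

Definition compl (h : X -> Prop) : X -> Prop := fun x => ~ h x.

Definition halfspace (h : X -> Prop) : Prop :=
  (exists x, h x) /\ (exists x, ~ h x) /\ convex h /\ convex (compl h).

Definition subset (a b : X -> Prop) : Prop := forall x, a x -> b x.
Definition psubset (a b : X -> Prop) : Prop :=
  subset a b /\ exists x, b x /\ ~ a x.

Definition transverse (h k : X -> Prop) : Prop :=
  (exists x, h x /\ k x) /\ (exists x, h x /\ ~ k x) /\
  (exists x, ~ h x /\ k x) /\ (exists x, ~ h x /\ ~ k x).

Definition strongly_separated (h k : X -> Prop) : Prop :=
  ~ exists l, halfspace l /\ transverse l h /\ transverse l k.

Definition finite_dim : Prop :=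
  exists D : nat, forall l : list (X -> Prop),
    (forall h, In h l -> halfspace h) ->
    (forall i j, i < j < length l ->
       transverse (nth i l (fun _ => False)) (nth j l (fun _ => False))) ->
    length l <= D.

Definition hat_sub (a b : X -> Prop) : Prop := psubset a b \/ psubset (compl a) b.

Definition in_beta (h1 h2 h : X -> Prop) : Prop :=
  (hat_sub h1 h /\ transverse h h2) \/
  (hat_sub h2 h /\ transverse h h1) \/
  (hat_sub h1 h /\ hat_sub h2 h).

Definition bridge (h1 h2 : X -> Prop) (x : X) : Prop :=
  forall h, halfspace h -> in_beta h1 h2 h -> h x.

Definition Iint (v w m : X) : Prop :=
  forall h, halfspace h -> h v -> h w -> h m.

End Defs.
Arguments walk {X}.
Arguments is_dist {X}.
Arguments geod_interval {X}.
Arguments median_graph {X}.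
Arguments convex {X}.
Arguments compl {X}.
Arguments halfspace {X}.
Arguments subset {X}.
Arguments psubset {X}.
Arguments transverse {X}.
Arguments strongly_separated {X}.
Arguments finite_dim {X}.
Arguments hat_sub {X}.
Arguments in_beta {X}.
Arguments bridge {X}.
Arguments Iint {X}.

(* Main.v *)
Require Import Defs.
From Stdlib Require Import Arith Lia List Classical ClassicalEpsilon.

Lemma min_ex (P : nat -> Prop) : (exists n, P n) -> exists n, P n /\ forall m, P m -> n <= m.
Proof.
  intros [n Hn]. revert Hn. induction n as [n IH] using (well_founded_induction lt_wf).
  intros Hn.
  destruct (classic (exists m, P m /\ m < n)) as [[m [Pm Hm]]|H].
  - exact (IH m Hm Pm).
  - exists n; split; auto. intros m Pm. destruct (le_lt_dec n m); auto.
    exfalso; apply H; eauto.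
Qed.

Section G.
Variable X : Type.
Variable adj : X -> X -> Prop.
Hypothesis Hmed : median_graph adj.

Lemma walk_app n m x y z : walk adj n x y -> walk adj m y z -> walk adj (n + m) x z.
Proof. induction 1; simpl; auto. intros; econstructor; eauto. Qed.

Lemma adj_sym x y : adj x y -> adj y x.
Proof. destruct Hmed as [H _]; auto. Qed.

Lemma walk1 x y : adj x y -> walk adj 1 x y.
Proof. intros; econstructor; eauto; constructor. Qed.

Lemma walk_rev n x y : walk adj n x y -> walk adj n y x.
Proof.
  induction 1. constructor.
  replace (S n) with (n + 1) by lia. eapply walk_app; eauto. apply walk1, adj_sym; auto.
Qed.

Lemma dist_ex u v : exists n, is_dist adj u v n.
Proof.
  destruct Hmed as [_ [_ [Hc _]]].
  destruct (min_ex (fun n => walk adj n u v) (Hc u v)) as [n [H1 H2]].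
  exists n; split; auto.
Qed.

Definition d u v := proj1_sig (constructive_indefinite_description _ (dist_ex u v)).

Lemma d_spec u v : is_dist adj u v (d u v).
Proof. unfold d. destruct (constructive_indefinite_description _ _); auto. Qed.

Lemma d_walk n u v : walk adj n u v -> d u v <= n.
Proof. intros H. apply (proj2 (d_spec u v)); auto. Qed.

Lemma d_eq u v n : is_dist adj u v n -> d u v = n.
Proof.
  intros [H1 H2]. pose proof (d_spec u v) as [H3 H4].
  specialize (H2 _ H3). specialize (H4 _ H1). lia.
Qed.

Lemma d_sym u v : d u v = d v u.
Proof.
  pose proof (d_spec u v) as [H1 _]. pose proof (d_spec v u) as [H2 _].
  apply walk_rev in H1. apply walk_rev in H2.
  apply d_walk in H1. apply d_walk in H2. lia.
Qed.

Lemma d_tri u v w : d u w <= d u v + d v w.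
Proof.
  pose proof (d_spec u v) as [H1 _]. pose proof (d_spec v w) as [H2 _].
  apply d_walk. eapply walk_app; eauto.
Qed.

Lemma d_refl u : d u u = 0.
Proof. assert (Hw0 : walk adj 0 u u) by constructor; pose proof (d_walk _ _ _ Hw0). lia. Qed.

Lemma d0 u v : d u v = 0 -> u = v.
Proof.
  intros H. pose proof (d_spec u v) as [H1 _]. rewrite H in H1. inversion H1; auto.
Qed.

Lemma adj_d u v : adj u v -> d u v = 1.
Proof.
  intros H. pose proof (d_walk _ _ _ (walk1 _ _ H)).
  destruct (d u v) eqn:E; [|lia].
  apply d0 in E; subst. destruct Hmed as [_ [Hi _]]. exfalso; eapply Hi; eauto.
Qed.

Lemma d1_adj u v : d u v = 1 -> adj u v.
Proof.
  intros H. pose proof (d_spec u v) as [H1 _]. rewrite H in H1.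
  inversion H1 as [|n0 x y z Ha Hw]; subst. inversion Hw; subst; auto.
Qed.

Lemma step u v k : d u v = S k -> exists u', adj u u' /\ d u' v = k.
Proof.
  intros H. pose proof (d_spec u v) as [H1 _]. rewrite H in H1.
  inversion H1 as [|n0 x y z Ha Hw]; subst. exists y; split; auto.
  apply d_walk in Hw. pose proof (d_tri u y v) as T. rewrite (adj_d _ _ Ha) in T. lia.
Qed.

Lemma gi u v w : geod_interval adj u v w <-> d u w + d w v = d u v.
Proof.
  split.
  - intros [a [b [c [H1 [H2 [H3 H4]]]]]].
    apply d_eq in H1; apply d_eq in H2; apply d_eq in H3. lia.
  - intros H. exists (d u w), (d w v), (d u v). repeat split; auto; apply d_spec.
Qed.

Definition medc u v w m := d u m + d m v = d u v /\ d v m + d m w = d v w /\ d u m + d m w = d u w.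

Lemma med_ex u v w : exists m, medc u v w m.
Proof.
  destruct Hmed as [_ [_ [_ H]]]. destruct (H u v w) as [m [[A [B C]] _]].
  exists m. unfold medc. rewrite <- !gi. auto.
Qed.

Lemma med_uniq u v w m m' : medc u v w m -> medc u v w m' -> m = m'.
Proof.
  destruct Hmed as [_ [_ [_ H]]]. destruct (H u v w) as [m0 [_ U]].
  unfold medc; rewrite <- !gi. intros A B.
  rewrite <- (U m A), <- (U m' B). auto.
Qed.

Lemma parity x y z : adj x y -> d x z = S (d y z) \/ d y z = S (d x z).
Proof.
  intros Hxy. pose proof (adj_d _ _ Hxy) as E.
  destruct (med_ex x y z) as [m [A [B C]]].
  destruct (d x m) eqn:Exm.
  - apply d0 in Exm; subst m. right. rewrite (d_sym y x) in B. lia.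
  - assert (d m y = 0) by lia. apply d0 in H; subst m. left. lia.
Qed.

Definition W a b z := d b z = S (d a z).

Ltac adjd := repeat match goal with H : adj ?x ?y |- _ =>
  lazymatch goal with _ : d x y = 1 |- _ => fail | _ =>
   pose proof (adj_d _ _ H); pose proof (adj_d _ _ (adj_sym _ _ H)) end end.

Lemma square u u' t t' z : adj u u' -> adj u' t' -> adj t' t -> adj t u ->
  u' <> t -> u <> t' -> W t t' z -> W u u' z.
Proof.
  unfold W. intros H1 H2 H3 H4 N1 N2 Hw.
  destruct (parity u u' z H1) as [P|P]; [|exact P].
  exfalso.
  assert (E : d u z = S (d t z) /\ d u' z = d t z).
  { destruct (parity t u z H4) as [P2|P2]; destruct (parity u' t' z H2) as [P3|P3]; lia. }
  destruct E as [E1 E2].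
  assert (Dut : d u t' = 2).
  { pose proof (d_tri u u' t') as T. rewrite (adj_d _ _ H1), (adj_d _ _ H2) in T.
    destruct (d u t') as [|[|[|k]]] eqn:D; try lia.
    - apply d0 in D; contradiction.
    - apply d1_adj in D. destruct (parity u t' z D); lia. }
  apply N1. apply (med_uniq u t' z); unfold medc.
  - adjd. pose proof (d_sym t' z). pose proof (d_sym u z). lia.
  - adjd. pose proof (d_sym t' z). pose proof (d_sym u z). lia.
Qed.

Lemma step' u v k : d v u = S k -> exists u', adj u u' /\ d v u' = k.
Proof. rewrite d_sym. intros H. destruct (step _ _ _ H) as [w [A B]]. exists w; rewrite d_sym; auto. Qed.

Lemma theta k : forall a b u u', adj a b -> adj u u' -> d a u = k -> W a b u -> W b a u' ->
  forall z, W a b z <-> W u u' z.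
Proof.
  unfold W. induction k; intros a b u u' Hab Huu Hk Wu Wu' z.
  - apply d0 in Hk; subst. adjd.
    assert (E : d b u' = 0) by lia.
    apply d0 in E; subst. tauto.
  - destruct (step' u a k Hk) as [t [Hut Hta]].
    assert (Eu' : d a u' = S (S k) /\ d b u' = S k).
    { pose proof (d_sym u a); pose proof (d_sym u' a); pose proof (d_sym u b); pose proof (d_sym u' b).
      destruct (parity u u' a Huu) as [P|P];
      destruct (parity u u' b Huu) as [Q|Q]; lia. }
    destruct Eu' as [Eu1 Eu2].
    assert (Etb : d b t = S k).
    { pose proof (d_tri b t u) as T. rewrite (d_sym t u), (adj_d _ _ Hut) in T.
      pose proof (d_sym t b); pose proof (d_sym u b). pose proof (d_sym t a); pose proof (d_sym u a).
      pose proof (d_tri b a t). pose proof (adj_d _ _ (adj_sym _ _ Hab)).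
      destruct (parity u t b Hut) as [Q|Q]; destruct (parity u t a Hut) as [Q'|Q']; lia. }
    assert (Dtu' : d t u' = 2).
    { pose proof (d_tri t u u') as T. rewrite (d_sym t u), (adj_d _ _ Hut), (adj_d _ _ Huu) in T.
      destruct (d t u') as [|[|[|j]]] eqn:D; try lia.
      - apply d0 in D; subst. pose proof (d_sym u' a). lia.
      - apply d1_adj in D. pose proof (d_sym t a); pose proof (d_sym u' a).
        destruct (parity t u' a D) as [Q|Q]; lia. }
    destruct (med_ex t u' b) as [m [M1 [M2 M3]]].
    assert (Dtm : d t m = 1 /\ d u' m = 1 /\ d m b = k).
    { pose proof (d_sym u' b); pose proof (d_sym t b); pose proof (d_sym u' m). lia. }
    destruct Dtm as [Dtm [Du'm Dmb]].
    apply d1_adj in Dtm. apply d1_adj in Du'm.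
    assert (Dma : d a m = S k).
    { pose proof (d_sym t a); pose proof (d_sym m a).
      destruct (parity t m a Dtm) as [Q|Q]; try lia.
      pose proof (d_tri a m u') as T. rewrite (adj_d _ _ (adj_sym _ _ Du'm)) in T. lia. }
    assert (Hum : u <> m).
    { intros ->. rewrite d_sym in Dmb. lia. }
    assert (Hu't : u' <> t).
    { intros ->. lia. }
    rewrite (IHk a b t m Hab Dtm Hta ltac:(lia) ltac:(rewrite d_sym in Dmb; lia) z).
    split; intros Hz.
    + apply (square u u' t m z); auto. apply adj_sym; auto. apply adj_sym; auto.
    + apply (square t m u u' z); auto. apply adj_sym; auto. apply adj_sym; auto.
Qed.


Lemma W_dich a b z : adj a b -> W a b z \/ W b a z.
Proof. unfold W. intros H. destruct (parity a b z H); auto. Qed.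

Lemma W_conv_aux a b : adj a b -> forall n u v w, d u v = n -> W a b u -> W a b v ->
  d u w + d w v = d u v -> W a b w.
Proof.
  intros Hab n. induction n; intros u v w Huv Wu Wv Hw.
  - apply d0 in Huv; subst. rewrite d_refl in Hw; assert (d v w = 0) by lia. apply d0 in H; subst; auto.
  - destruct (d u w) as [|m] eqn:Duw.
    + apply d0 in Duw; subst; auto.
    + destruct (step u w m Duw) as [u' [Huu Du'w]].
      pose proof (d_tri u' w v). pose proof (d_tri u u' v). pose proof (adj_d _ _ Huu).
      assert (Du'v : d u' v = n) by lia.
      destruct (W_dich a b u' Hab) as [Wu'|Wu'].
      * apply (IHn u' v w); auto. lia.
      * exfalso. pose proof (theta (d a u) a b u u' Hab Huu eq_refl Wu Wu' v) as T.
        apply T in Wv. unfold W in Wv. lia.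
Qed.

Lemma W_halfspace a b : adj a b -> halfspace adj (W a b).
Proof.
  intros Hab. split; [|split; [|split]].
  - exists a. unfold W. rewrite d_refl. apply adj_d, adj_sym; auto.
  - exists b. unfold W. rewrite d_refl. lia.
  - intros u v w Hu Hv Hg. apply gi in Hg. exact (W_conv_aux a b Hab (d u v) u v w eq_refl Hu Hv Hg).
  - intros u v w Hu Hv Hg Hw. apply gi in Hg.
    assert (forall z, compl (W a b) z -> W b a z).
    { intros z Hz. destruct (W_dich a b z Hab); auto. contradiction. }
    assert (W b a w). { exact (W_conv_aux b a (adj_sym _ _ Hab) (d u v) u v w eq_refl (H u Hu) (H v Hv) Hg). }
    unfold W in *. lia.
Qed.

Lemma separation x y : x <> y -> exists k, halfspace adj k /\ k x /\ ~ k y.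
Proof.
  intros Hxy. destruct (d x y) as [|n] eqn:E.
  - apply d0 in E; contradiction.
  - destruct (step x y n E) as [x' [Hx Dx]].
    exists (W x x'). split; [apply W_halfspace; auto|split].
    + unfold W. rewrite d_refl. apply adj_d, adj_sym; auto.
    + unfold W. lia.
Qed.

Lemma med_gi u v w : exists m, geod_interval adj u v m /\ geod_interval adj v w m /\ geod_interval adj u w m.
Proof. destruct Hmed as [_ [_ [_ H]]]. destruct (H u v w) as [m [A _]]. eauto. Qed.

Lemma hs_compl h : halfspace adj h -> halfspace adj (compl h).
Proof.
  intros [[a Ha] [[b Hb] [C1 C2]]]. split; [|split; [|split]].
  - exists b; auto.
  - exists a. unfold compl; auto.
  - exact C2.
  - intros u v w Hu Hv Hg. unfold compl in *. intros Hw. apply Hw.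
    apply (C1 u v w); apply NNPP; auto.
Qed.

Lemma nt_cases (h k : X -> Prop) : ~ transverse h k ->
  (forall z, h z -> ~ k z) \/ (forall z, h z -> k z) \/
  (forall z, ~ h z -> ~ k z) \/ (forall z, ~ h z -> k z).
Proof.
  intros N.
  destruct (classic (exists z, h z /\ k z)) as [E1|N1];
    [|left; intros z hz kz; apply N1; eauto].
  destruct (classic (exists z, h z /\ ~ k z)) as [E2|N2];
    [|right; left; intros z hz; apply NNPP; intro; apply N2; eauto].
  destruct (classic (exists z, ~ h z /\ k z)) as [E3|N3];
    [|right; right; left; intros z hz kz; apply N3; eauto].
  destruct (classic (exists z, ~ h z /\ ~ k z)) as [E4|N4];
    [|right; right; right; intros z hz; apply NNPP; intro; apply N4; eauto].
  exfalso; apply N; unfold transverse; auto.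
Qed.

Lemma in_beta_sym (h1 h2 k : X -> Prop) : in_beta h1 h2 k -> in_beta h2 h1 k.
Proof. unfold in_beta; tauto. Qed.

Lemma bridge_sym h1 h2 x : bridge adj h1 h2 x -> bridge adj h2 h1 x.
Proof. intros B k Hk Hb. apply B; auto. apply in_beta_sym; auto. Qed.

Lemma sideT (h1 h2 h : X -> Prop) x y :
  (forall z, h1 z -> ~ h2 z) -> strongly_separated adj h1 h2 -> halfspace adj h ->
  bridge adj h1 h2 x -> bridge adj h1 h2 y -> h x -> ~ h y -> transverse h h1 -> False.
Proof.
  intros Hdis Hss Hh Bx By Hx Hy T.
  assert (N : ~ transverse h h2) by (intro T2; apply Hss; eauto).
  pose proof T as [[z1 [T1a T1b]] [[z2 [T2a T2b]] [[z3 [T3a T3b]] [z4 [T4a T4b]]]]].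
  destruct (nt_cases h h2 N) as [A|[A|[A|A]]].
  - apply (Bx (compl h)); [apply hs_compl; auto| |exact Hx].
    right; left. split.
    + left. split; [intros z Hz Hz'; exact (A z Hz' Hz)|].
      exists z3; split; firstorder.
    + unfold transverse, compl. repeat split; eauto.
  - exact (Hdis z1 T1b (A z1 T1a)).
  - apply Hy. apply (By h Hh). right; left. split; auto.
    left. split; [intros z Hz; apply NNPP; intro; exact (A z H Hz)|].
    exists z1; split; firstorder.
  - exact (Hdis z3 T3b (A z3 T3a)).
Qed.

Lemma stepC (h1 h2 h : X -> Prop) x y :
  halfspace adj h1 -> halfspace adj h2 -> psubset h1 (compl h2) ->
  strongly_separated adj h1 h2 -> halfspace adj h ->
  bridge adj h1 h2 x -> bridge adj h1 h2 y -> h x -> ~ h y ->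
  (subset h1 h /\ subset h (compl h2)) \/ (subset h1 (compl h) /\ subset (compl h) (compl h2)).
Proof.
  intros H1 H2 [Hdis [z0 [Hz0a Hz0b]]] Hss Hh Bx By Hx Hy.
  destruct H1 as [[z1 Hz1] _]. destruct H2 as [[z2 Hz2] _].
  unfold compl in Hz0a.
  assert (Hdis' : forall z, h1 z -> ~ h2 z) by exact Hdis.
  assert (BH : in_beta h1 h2 h -> False) by (intro B; exact (Hy (By h Hh B))).
  assert (BC : in_beta h1 h2 (compl h) -> False)
    by (intro B; exact (Bx (compl h) (hs_compl _ Hh) B Hx)).
  destruct (classic (transverse h h1)) as [T|T1].
  { exfalso; apply (sideT h1 h2 h x y); auto. }
  destruct (classic (transverse h h2)) as [T|T2].
  { exfalso; apply (sideT h2 h1 h x y); auto.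
    - intros z a b; exact (Hdis z b a).
    - intros [l [A [B C]]]; apply Hss; eauto.
    - apply bridge_sym; auto.
    - apply bridge_sym; auto. }
  unfold subset, compl, hat_sub, psubset, in_beta in *.
  destruct (nt_cases h h1 T1) as [A1|[A1|[A1|A1]]];
  destruct (nt_cases h h2 T2) as [A2|[A2|[A2|A2]]].
  - exfalso; apply BC. right; right. split.
    + left. split; [intros z a b; exact (A1 z b a)|]. exists z2; split; firstorder.
    + left. split; [intros z a b; exact (A2 z b a)|]. exists z1; split; firstorder.
  - destruct (classic (forall z, h2 z -> h z)) as [Y|Nn].
    + right. split; [intros z a b; exact (A1 z b a)|]. intros z a b; exact (a (Y z b)).
    + apply not_all_ex_not in Nn. destruct Nn as [w Hw].
      assert (h2 w /\ ~ h w) as [Hw1 Hw2] by tauto.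
      exfalso; apply BC. right; right. split.
      * left. split; [intros z a b; exact (A1 z b a)|]. exists z0; split; firstorder.
      * right. split; [intros z a b; exact (a (A2 z b))|]. exists w; split; firstorder.
  - right. split; [intros z a b; exact (A1 z b a)|]. auto.
  - exfalso. exact (Hdis z1 Hz1 (A2 z1 (fun b => A1 z1 b Hz1))).
  - destruct (classic (forall z, h1 z -> h z)) as [Y|Nn].
    + left. split; auto.
    + apply not_all_ex_not in Nn. destruct Nn as [w Hw].
      assert (h1 w /\ ~ h w) as [Hw1 Hw2] by tauto.
      exfalso; apply BC. right; right. split.
      * right. split; [intros z a b; exact (a (A1 z b))|]. exists w; split; firstorder.
      * left. split; [intros z a b; exact (A2 z b a)|]. exists w; split; firstorder.
  - exfalso. exact (Hdis x (A1 x Hx) (A2 x Hx)).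
  - exfalso. assert (h z2) by (apply NNPP; intro c; exact (A2 z2 c Hz2)).
    exact (Hdis z2 (A1 z2 H) Hz2).
  - exfalso. destruct (classic (h z0)) as [c|c]; [exact (Hz0b (A1 z0 c))|exact (Hz0a (A2 z0 c))].
  - left. split; [intros z a; apply NNPP; intro c; exact (A1 z c a)|]. auto.
  - exfalso. assert (h z1) by (apply NNPP; intro c; exact (A1 z1 c Hz1)).
    exact (Hdis z1 Hz1 (A2 z1 H)).
  - exfalso; apply BH. right; right. split.
    + left. split; [intros z a; apply NNPP; intro c; exact (A1 z c a)|].
      exists z2; split; [apply NNPP; intro c; exact (A2 z2 c Hz2)|firstorder].
    + left. split; [intros z a; apply NNPP; intro c; exact (A2 z c a)|].
      exists z1; split; [apply NNPP; intro c; exact (A1 z1 c Hz1)|firstorder].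
  - destruct (classic (forall z, h z -> ~ h2 z)) as [Y|Nn].
    + left. split; [intros z a; apply NNPP; intro c; exact (A1 z c a)|]. auto.
    + apply not_all_ex_not in Nn. destruct Nn as [w Hw].
      assert (h w /\ h2 w) as [Hw1 Hw2] by tauto.
      exfalso; apply BH. right; right. split.
      * left. split; [intros z a; apply NNPP; intro c; exact (A1 z c a)|].
        exists w; split; firstorder.
      * right. split; [intros z a; apply NNPP; intro c; exact (a (A2 z c))|].
        exists w; split; firstorder.
  - exfalso. assert (~ h z2) by (intro c; exact (A2 z2 c Hz2)).
    exact (Hdis z2 (A1 z2 H) Hz2).
  - exfalso. destruct (classic (h z0)) as [c|c]; [exact (Hz0a (A2 z0 c))|exact (Hz0b (A1 z0 c))].
  - destruct (classic (forall z, h1 z -> ~ h z)) as [Y|Nn].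
    + right. split; auto.
    + apply not_all_ex_not in Nn. destruct Nn as [w Hw].
      assert (h1 w /\ h w) as [Hw1 Hw2] by tauto.
      exfalso; apply BH. right; right. split.
      * right. split; [intros z a; apply NNPP; intro c; exact (a (A1 z c))|].
        exists w; split; firstorder.
      * left. split; [intros z a; apply NNPP; intro c; exact (A2 z c a)|].
        exists w; split; firstorder.
  - exfalso. exact (Hdis y (A1 y Hy) (A2 y Hy)).
Qed.
Lemma bridge_min (A C : X -> Prop) p q : convex adj A -> (forall z, A z -> ~ C z) ->
  A p -> C q -> (forall p' q', A p' -> C q' -> d p q <= d p' q') -> bridge adj A C p.
Proof.
  intros cA Hdis Ap Cq Hmin k Hk Hb.
  assert (key : (forall z, A z -> k z) \/ ((forall z, C z -> k z) /\ exists r, A r /\ k r)).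
  { unfold in_beta, hat_sub, psubset, subset, compl in Hb.
    destruct Hb as [[[[S _]|[S [r [kr nr]]]] _] | [[[[S _]|[S [r [kr nr]]]] Tr] | [[[S _]|[S [r [kr nr]]]] _]]].
    - left; auto.
    - right. split; [intros z Cz; apply S; intro Az; exact (Hdis z Az Cz)|].
      exists r; split; auto. apply NNPP; auto.
    - right. split; auto. destruct Tr as [[r [kr Ar]] _]. eauto.
    - left. intros z Az. apply S. apply Hdis; auto.
    - left; auto.
    - right. split; [intros z Cz; apply S; intro Az; exact (Hdis z Az Cz)|].
      exists r; split; auto. apply NNPP; auto. }
  destruct key as [S|[S [r [Ar kr]]]]; auto.
  destruct (med_gi p q r) as [m [G1 [G2 G3]]].
  assert (Am : A m) by (exact (cA p r m Ap Ar G3)).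
  assert (km : k m).
  { destruct Hk as [_ [_ [ck _]]]. exact (ck q r m (S q Cq) kr G2). }
  apply gi in G1. pose proof (Hmin m q Am Cq).
  assert (E : d p m = 0) by lia. apply d0 in E. subst; auto.
Qed.

Theorem corollary3' (Hfd : finite_dim adj)
  (h1 h2 : X -> Prop) (Hh1 : halfspace adj h1) (Hh2 : halfspace adj h2)
  (Hsub : psubset h1 (compl h2)) (Hss : strongly_separated adj h1 h2) :
  exists x1 x2 : X,
    (forall x, (h1 x /\ bridge adj h1 h2 x) <-> x = x1) /\
    (forall x, (h2 x /\ bridge adj h1 h2 x) <-> x = x2) /\
    (forall m, bridge adj h1 h2 m <-> Iint adj x1 x2 m) /\
    (forall h, halfspace adj h ->
       ((exists x y, bridge adj h1 h2 x /\ bridge adj h1 h2 y /\ h x /\ ~ h y) <->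
        ((subset h1 h /\ subset h (compl h2)) \/
         (subset h1 (compl h) /\ subset (compl h) (compl h2))))).
Proof.
  pose proof Hsub as [Hdis [z0 [Hz0a Hz0b]]].
  assert (Hdis' : forall z, h1 z -> ~ h2 z) by exact Hdis.
  pose proof Hh1 as [[z1 Hz1] [_ [cv1 _]]]. pose proof Hh2 as [[z2 Hz2] [_ [cv2 _]]].
  destruct (min_ex (fun n => exists p q, h1 p /\ h2 q /\ d p q = n)) as [n [[p [q [Hp [Hq Hn]]]] Hmin]].
  { exists (d z1 z2); eauto. }
  assert (Hm : forall p' q', h1 p' -> h2 q' -> d p q <= d p' q').
  { intros p' q' a b. rewrite Hn. apply Hmin. eauto. }
  assert (Bp : bridge adj h1 h2 p) by (apply (bridge_min h1 h2 p q); auto).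
  assert (Bq : bridge adj h1 h2 q).
  { apply bridge_sym. apply (bridge_min h2 h1 q p); auto.
    - intros z a b; exact (Hdis' z b a).
    - intros p' q' a b. rewrite (d_sym q p), (d_sym p' q'). auto. }
  assert (SC : forall h x y, halfspace adj h -> bridge adj h1 h2 x -> bridge adj h1 h2 y ->
     h x -> ~ h y ->
     (subset h1 h /\ subset h (compl h2)) \/ (subset h1 (compl h) /\ subset (compl h) (compl h2))).
  { intros h x y Hh Bx By hx hy. apply (stepC h1 h2 h x y); auto. }
  exists p, q. split; [|split; [|split]].
  - intros x; split; [|intros ->; auto].
    intros [hx Bx]. apply NNPP; intro Ne.
    destruct (separation x p Ne) as [k [Hk [kx kp]]].
    destruct (SC k x p Hk Bx Bp kx kp) as [[S1 S2]|[S1 S2]].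
    + exact (kp (S1 p Hp)).
    + exact (S1 x hx kx).
  - intros x; split; [|intros ->; auto].
    intros [hx Bx]. apply NNPP; intro Ne.
    destruct (separation x q Ne) as [k [Hk [kx kq]]].
    destruct (SC k x q Hk Bx Bq kx kq) as [[S1 S2]|[S1 S2]].
    + exact (S2 x kx hx).
    + exact (S2 q kq Hq).
  - intros m; split.
    + intros Bm h Hh hp hq. apply NNPP; intro hm.
      destruct (SC h p m Hh Bp Bm hp hm) as [[S1 S2]|[S1 S2]].
      * exact (S2 q hq Hq).
      * exact (S1 p Hp hp).
    + intros I k Hk Hb. exact (I k Hk (Bp k Hk Hb) (Bq k Hk Hb)).
  - intros h Hh. split.
    + intros [x [y [Bx [By [hx hy]]]]]. exact (SC h x y Hh Bx By hx hy).
    + intros [[S1 S2]|[S1 S2]].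
      * exists p, q. repeat split; auto. intro c. exact (S2 q c Hq).
      * exists q, p. repeat split; auto.
        apply NNPP; intro c. exact (S2 q c Hq).
        exact (S1 p Hp).
Qed.
End G.

Theorem corollary3 (X : Type) (adj : X -> X -> Prop)
  (Hmed : median_graph adj) (Hfd : finite_dim adj)
  (h1 h2 : X -> Prop) (Hh1 : halfspace adj h1) (Hh2 : halfspace adj h2)
  (Hsub : psubset h1 (compl h2)) (Hss : strongly_separated adj h1 h2) :
  exists x1 x2 : X,
    (forall x, (h1 x /\ bridge adj h1 h2 x) <-> x = x1) /\
    (forall x, (h2 x /\ bridge adj h1 h2 x) <-> x = x2) /\
    (forall m, bridge adj h1 h2 m <-> Iint adj x1 x2 m) /\
    (forall h, halfspace adj h ->
       ((exists x y, bridge adj h1 h2 x /\ bridge adj h1 h2 y /\ h x /\ ~ h y) <->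
        ((subset h1 h /\ subset h (compl h2)) \/
         (subset h1 (compl h) /\ subset (compl h) (compl h2))))).
Proof. exact (corollary3' X adj Hmed Hfd h1 h2 Hh1 Hh2 Hsub Hss). Qed.
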